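(* Let $B_1,\dots,B_k$ be finite blocks (nonseparable graphs, i.e. connected graphs with no cut vertex), each of which admits an $\alpha$-labeling. Then the disjoint union $B_1\cup B_2\cup\dots\cup B_k$ is odd-graceful.
   Context: For a graph $G$ with $n$ edges, a graceful labeling is an injection $f:V(G)\to\{0,1,\dots,n\}$ such that the edge weights $|f(x)-f(y)|$, $xy\in E(G)$, are exactly $\{1,2,\dots,n\}$. An $\alpha$-labeling is a graceful labeling $f$ for which there is an integer $\lambda$ such that for every edge $xy$ either $f(x)\le\lambda<f(y)$ or $f(y)\le\lambda<f(x)$. A graph $G$ with $n$ edges is odd-graceful if there is an injective map $f:V(G)\to\{0,1,\dots,2n-1\}$ such that the set of edge weights $\{|f(x)-f(y)| : xy\in E(G)\}$ equals $\{1,3,\dots,2n-1\}$. *)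

(* Defs.v *)
(* Finite simple graphs = symmetric irreflexive boolean
   relations on a finType. *)
From mathcomp Require Import all_boot.
Set Implicit Arguments. Unset Strict Implicit. Unset Printing Implicit Defensive.

Definition absdiff (m n : nat) : nat := (m - n) + (n - m).

Section Graphs.
Variable V : finType.

Definition simple_graph (e : rel V) : Prop := symmetric e /\ irreflexive e.

Definition edges (e : rel V) : {set {set V}} :=
  [set [set x; y] | x in V, y in V & e x y].

Definition nedges (e : rel V) : nat := #|edges e|.

Definition gconnected (e : rel V) : Prop := forall x y : V, connect e x y.

Definition del_vertex (e : rel V) (v : V) : rel V :=
  [rel a b | [&& e a b, a != v & b != v]].

Definition cut_vertex (e : rel V) (v : V) : Prop :=
  exists x y : V, [/\ x != v, y != v & ~~ connect (del_vertex e v) x y].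

Definition block (e : rel V) : Prop :=
  [/\ simple_graph e, 2 <= #|V|, gconnected e & forall v, ~ cut_vertex e v].

Definition graceful_labeling (e : rel V) (f : V -> nat) : Prop :=
  let n := nedges e in
  [/\ injective f, forall x, f x <= n &
      forall w, (exists x y, e x y /\ absdiff (f x) (f y) = w) <-> (1 <= w <= n)].

Definition alpha_labeling (e : rel V) (f : V -> nat) : Prop :=
  graceful_labeling e f /\
  exists lam : nat, forall x y, e x y ->
     (f x <= lam < f y) \/ (f y <= lam < f x).

Definition has_alpha_labeling (e : rel V) : Prop :=
  exists f, alpha_labeling e f.

Definition odd_graceful_labeling (e : rel V) (f : V -> nat) : Prop :=
  let n := nedges e in
  [/\ injective f, forall x, f x < 2 * n &
      forall w, (exists x y, e x y /\ absdiff (f x) (f y) = w) <-> (odd w && (w < 2 * n))].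

Definition odd_graceful (e : rel V) : Prop := exists f, odd_graceful_labeling e f.

End Graphs.

Definition disj_union (k : nat) (T : 'I_k -> finType) (g : forall i, rel (T i))
  : rel {i : 'I_k & T i} :=
  fun u v => (tag u == tag v) && g (tag u) (tagged u) (tagged_as u v).

(* Main.v *)
Require Import Defs.
From mathcomp Require Import all_boot.
From mathcomp Require Import zify.
From Stdlib Require Import ClassicalEpsilon.
Set Implicit Arguments. Unset Strict Implicit. Unset Printing Implicit Defensive.

Unset Implicit Arguments.
Section Constr.
Variable k : nat.
Variable T : 'I_k -> finType.
Variable g : forall i, rel (T i).
Variable F : forall i, T i -> nat.
Variable lam : 'I_k -> nat.
Hypothesis HF : forall i : 'I_k, graceful_labeling (g i) (F i).
Hypothesis Hlam : forall i (x y : T i), g i x y ->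
   (F i x <= lam i < F i y) \/ (F i y <= lam i < F i x).
Hypothesis Hlt : forall i : 'I_k, lam i < nedges (g i).

Definition nn (j : nat) : nat :=
  if (insub j : option 'I_k) is Some i then nedges (g i) else 0.
Definition ll (j : nat) : nat :=
  if (insub j : option 'I_k) is Some i then lam i else 0.
Definition MM (i : nat) : nat := \sum_(0 <= j < i) nn j.
Definition ss (i : nat) : nat := \sum_(i.+1 <= j < k) (2 * ll j + 1).
Definition cc (i : nat) : nat := ss i + 2 * MM i.+1.

Lemma nnE (i : 'I_k) : nn i = nedges (g i).
Proof. by rewrite /nn valK. Qed.
Lemma llE (i : 'I_k) : ll i = lam i.
Proof. by rewrite /ll valK. Qed.

Lemma sS i : i.+1 < k -> ss i = 2 * ll i.+1 + 1 + ss i.+1.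
Proof. by move=> h; rewrite /ss big_ltn. Qed.
Lemma s0 i : k <= i.+1 -> ss i = 0.
Proof. by move=> h; rewrite /ss big_geq. Qed.
Lemma MS i : MM i.+1 = MM i + nn i.
Proof. by rewrite /MM big_nat_recr. Qed.

Lemma s_mono : {homo ss : i j / i <= j >-> j <= i}.
Proof.
apply: (@homo_leq _ ss (fun a b => b <= a)) => //.
- move=> y x z h1 h2; exact: leq_trans h2 h1.
- move=> i; case: (ltnP i.+1 k) => h.
  + rewrite (sS _ h); lia.
  + by rewrite (s0 i.+1) //; apply: leq_trans h _.
Qed.

Lemma M_mono : {homo MM : i j / i <= j}.
Proof.
apply: (@homo_leq _ MM leq) => //.
- move=> y x z; exact: leq_trans.
- move=> i; rewrite MS; lia.
Qed.

Lemma c_mono : {homo cc : i j / i <= j}.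
Proof.
apply: (@homo_leq _ cc leq) => //.
- move=> y x z; exact: leq_trans.
- move=> i; rewrite /cc; case: (ltnP i.+1 k) => h.
  + rewrite (sS _ h) (MS i.+1).
    have := Hlt (Ordinal h). rewrite -(nnE (Ordinal h)) -(llE (Ordinal h)) /=.
    lia.
  + rewrite (s0 _ h) (MS i.+1); lia.
Qed.


Definition hh (u : {i : 'I_k & T i}) : nat :=
  let i := tag u in let a := F i (tagged u) in
  if a <= lam i then ss i + 2 * a else ss i + 2 * MM i + (2 * a).-1.

Lemma Fle i (x : T i) : F i x <= nedges (g i).
Proof. by case: (HF i) => _ H _; apply: H. Qed.

Lemma h_lt i (x : T i) : hh (existT _ i x) < cc i.
Proof.
rewrite /hh /cc /= MS nnE; have := Fle i x; have := Hlt i.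
case: (leqP (F i x) (lam i)) => h; lia.
Qed.

Lemma h_ge i (x : T i) : ss i <= hh (existT _ i x).
Proof. rewrite /hh /=; case: ifP => _; lia. Qed.

Lemma h_low i (x : T i) : F i x <= lam i -> hh (existT _ i x) <= ss i + 2 * lam i.
Proof. rewrite /hh /= => h; rewrite h; lia. Qed.

Lemma h_up i (x : T i) : lam i < F i x ->
  ss i + 2 * MM i + 2 * lam i + 1 <= hh (existT _ i x).
Proof. rewrite /hh /= => h; rewrite (leqNgt (F i x)) h /=; lia. Qed.

Lemma cross (i j : 'I_k) (x : T i) (y : T j) : (i < j)%N ->
  hh (existT _ i x) != hh (existT _ j y).
Proof.
move=> lij.
have ej : (j.-1).+1 = j by rewrite prednK //; apply: leq_ltn_trans lij.
have hj : (j.-1).+1 < k by rewrite ej.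
have e1 := sS _ hj. rewrite ej llE in e1.
have m1 : ss j.-1 <= ss i by apply: s_mono; lia.
have m2 : cc i <= cc j.-1 by apply: c_mono; lia.
have := h_lt i x; have := h_ge i x.
case: (leqP (F j y) (lam j)) => hy.
- have := h_low j y hy; lia.
- have := h_up j y hy; move: m2; rewrite /cc ej; lia.
Qed.

Lemma h_inj : injective hh.
Proof.
move=> [i x] [j y] E.
case: (ltngtP i j) => [lt|gt|eq].
- by move: (cross i j x y lt); rewrite E eqxx.
- by move: (cross j i y x gt); rewrite E eqxx.
- have eij := ord_inj eq; subst j.
  have Finj : injective (F i) by case: (HF i).
  move: E; rewrite /hh /=.
  case: (leqP (F i x) (lam i)) => hx; case: (leqP (F i y) (lam i)) => hy.
  + by move=> E; congr existT; apply: Finj; lia.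
  + lia.
  + lia.
  + by move=> E; congr existT; apply: Finj; lia.
Qed.


Lemma Tagged_inj (i : 'I_k) : injective (fun x : T i => existT T i x).
Proof.
move=> x y E.
have := congr1 (tagged_as (existT T i x)) E.
by rewrite !tagged_asE.
Qed.

Definition phi (i : 'I_k) (A : {set T i}) : {set {i : 'I_k & T i}} :=
  [set existT T i x | x in A].

Lemma phi2 (i : 'I_k) (x y : T i) :
  phi i [set x; y] = [set existT T i x; existT T i y].
Proof. by rewrite /phi imsetU1 imset_set1. Qed.

Lemma edges_union : edges (disj_union g) =
  \bigcup_(i : 'I_k) [set phi i A | A in edges (g i)].
Proof.
apply/eqP; rewrite eqEsubset; apply/andP; split; apply/subsetP => B.
- case/imset2P => [[i x] [j y]] _; rewrite !inE /disj_union /= => /andP [/eqP eij].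
  subst j; rewrite tagged_asE => Hxy ->.
  apply/bigcupP; exists i => //; apply/imsetP; exists [set x; y]; last by rewrite phi2.
  by apply/imset2P; exists x y; rewrite ?inE.
- case/bigcupP => i _ /imsetP [A /imset2P [x y _]].
  rewrite !inE => Hxy -> ->; rewrite phi2.
  apply/imset2P; exists (existT T i x) (existT T i y); rewrite ?inE //.
  by rewrite /disj_union /= eqxx tagged_asE.
Qed.

Lemma nedges_union : nedges (disj_union g) = MM k.
Proof.
rewrite /MM big_mkord (eq_bigr (fun i => nedges (g i))); last by move=> i _; rewrite nnE.
rewrite /nedges edges_union -sum1_card partition_disjoint_bigcup.
- apply: eq_bigr => i _; rewrite sum1_card card_imset //.
  apply: imset_inj; exact: Tagged_inj.
- move=> i j nij; rewrite -setI_eq0; apply/eqP/setP => B; rewrite !inE.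
  apply/negbTE/negP => /andP [/imsetP [A /imset2P [x y _ _ ->] ->]].
  case/imsetP => A' _ E.
  have : existT T i x \in phi j A' by rewrite -E phi2 !inE eqxx.
  case/imsetP => z _ E2.
  have eij : i = j := congr1 tag E2.
  by rewrite eij eqxx in nij.
Qed.


Lemma locate m : m < MM k -> exists i : 'I_k, MM i <= m < MM i.+1.
Proof.
suff H : forall j, j <= k -> m < MM j -> exists i : 'I_k, MM i <= m < MM i.+1.
  exact: H.
elim=> [|j IH] hj hm; first by move: hm; rewrite /MM big_geq.
case: (ltnP m (MM j)) => h; first by apply: IH => //; lia.
by exists (Ordinal hj); rewrite h hm.
Qed.

Lemma edge_weight i (x y : T i) : F i x <= lam i < F i y ->
  absdiff (hh (existT T i x)) (hh (existT T i y))
  = 2 * MM i + 2 * absdiff (F i x) (F i y) - 1.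
Proof.
move=> /andP [h1 h2]; rewrite /hh /absdiff /= h1 (leqNgt (F i y)) h2 /=; lia.
Qed.

Lemma odd2 a : 0 < a -> odd (2 * a - 1).
Proof.
move=> ha; rewrite (_ : 2 * a - 1 = (a.-1).*2.+1); last by rewrite -muln2; lia.
by rewrite /= odd_double.
Qed.

Lemma odd2' a b : 0 < b -> odd (2 * a + 2 * b - 1).
Proof.
move=> hb; rewrite (_ : 2 * a + 2 * b - 1 = 2 * (a + b) - 1); last by lia.
apply: odd2; lia.
Qed.

Lemma absdiffC a b : absdiff a b = absdiff b a.
Proof. rewrite /absdiff; lia. Qed.

Lemma hh_ogl : odd_graceful_labeling (disj_union g) hh.
Proof.
split; first exact: h_inj.
- move=> [i x]; rewrite nedges_union.
  have hk : 0 < k by have := ltn_ord i; lia.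
  have := h_lt i x; have : cc i <= cc k.-1 by apply: c_mono; have := ltn_ord i; lia.
  rewrite /cc (s0 k.-1); last by rewrite prednK.
  rewrite prednK // => h1 h2; apply: (leq_trans h2); lia.
- move=> w; split.
  + case=> [[i x] [[j y] [Euv <-]]]; move: Euv; rewrite /disj_union /=.
    case/andP => /eqP eij; subst j; rewrite tagged_asE => Hxy.
    have [_ _ Hw] := HF i.
    have /Hw hd : exists x0 y0, g i x0 y0 /\ absdiff (F i x0) (F i y0) = absdiff (F i x) (F i y).
      by exists x, y.
    have hM : MM i.+1 <= MM k by apply: M_mono; have := ltn_ord i; lia.
    move: hM; rewrite nedges_union MS nnE => hM.
    case: (Hlam i x y Hxy) => hl.
    * rewrite edge_weight //; apply/andP; split; first by apply: odd2'; lia.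
      lia.
    * rewrite absdiffC edge_weight // absdiffC; apply/andP; split; first by apply: odd2'; lia.
      lia.
  + case/andP => ow lw.
    have ew : w = (w./2).*2.+1 by have := odd_double_half w; rewrite ow; lia.
    have hm : w./2 < MM k by move: lw; rewrite nedges_union; lia.
    have [i /andP [hi1 hi2]] := locate _ hm.
    move: hi2; rewrite MS nnE => hi2.
    have [_ _ Hw] := HF i.
    have /Hw [x [y [Hxy hd]]] : 1 <= w./2 - MM i + 1 <= nedges (g i) by lia.
    exists (existT T i x), (existT T i y); split.
      by rewrite /disj_union /= eqxx tagged_asE.
    case: (Hlam i x y Hxy) => hl.
    * by rewrite edge_weight // hd; lia.
    * by rewrite absdiffC edge_weight // absdiffC hd; lia.
Qed.

End Constr.

Theorem theorem3 (k : nat) (T : 'I_k -> finType) (g : forall i, rel (T i)) :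
  (forall i, block (g i)) ->
  (forall i, has_alpha_labeling (g i)) ->
  odd_graceful (disj_union g).
Proof.
move=> Hb Ha.
pose cF i := constructive_indefinite_description _ (Ha i).
pose F i := proj1_sig (cF i).
have HFa : forall i, alpha_labeling (g i) (F i) := fun i => proj2_sig (cF i).
pose cL i := constructive_indefinite_description _ (proj2 (HFa i)).
pose lam i := proj1_sig (cL i).
have Hlam : forall i (x y : T i), g i x y ->
   (F i x <= lam i < F i y) \/ (F i y <= lam i < F i x).
  by move=> i; exact: (proj2_sig (cL i)).
have HF : forall i, graceful_labeling (g i) (F i) := fun i => proj1 (HFa i).
have Hlt : forall i, lam i < nedges (g i).
  move=> i; have [Finj Fle Hw] := HF i.
  have [_ h2 _ _] := Hb i.
  have [x [y [_ _ nxy]]] := card_gt1P h2.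
  have hn : 1 <= nedges (g i).
    have := Fle x; have := Fle y.
    have : F i x != F i y by apply: contra nxy => /eqP /Finj ->.
    move=> /eqP; lia.
  have [x' [y' [Hxy _]]] : exists x' y', g i x' y' /\ absdiff (F i x') (F i y') = 1.
    by apply/Hw; rewrite hn.
  have := Fle x'; have := Fle y'.
  case: (Hlam i x' y' Hxy); lia.
exists (hh k T g F lam); exact: hh_ogl.
Qed.
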